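(* There is a constant $C>0$ independent of $h$ such that, for $h$ sufficiently small, the solution $u^h$ of the hybrid discrete problem $$F_h(u^h)(x)=0\ \text{for } x\in\Omega^h_0,\qquad u^h=r_h(g)\ \text{on }\partial\Omega^h,$$ lying in $B_\rho(r_h(u))$ with $\rho=C_*h^{2+n/2}$ (the fixed point of $S$), satisfies $|u^h|_{\Omega^h_0}\le C$.
   Context: Setting. Let $n\ge 2$, $\Omega=(0,1)^n$, $f\in C(\overline\Omega)$ with $f>0$, and $g\in C(\partial\Omega)$ admitting a convex extension $\tilde g\in C(\overline\Omega)$. Let $u$ be the unique convex viscosity solution of $\det D^2u=f$ in $\Omega$, $u=g$ on $\partial\Omega$. Let $h>0$ with $1/h\in\mathbb Z$, $\mathbb Z_h=\{x\in\mathbb R^n: x_i/h\in\mathbb Z\ \forall i\}$, $\Omega^h=\overline\Omega\cap\mathbb Z_h$, $\Omega^h_0=\Omega\cap\mathbb Z_h$, $\partial\Omega^h=\Omega^h\setminus\Omega^h_0$. $\mathcal M(\Omega^h)$ is the set of real functions on $\Omega^h$ (mesh functions); $r_h(v)$ is the restriction of a function $v$ to the grid. For $T_h\subset\Omega^h$, $|v^h|_{T_h}=\max_{x\in T_h}|v^h(x)|$. With $e^i$ the unit vectors, $\partial^i_+v^h(x)=(v^h(x+he^i)-v^h(x))/h$, $\partial^i_-v^h(x)=(v^h(x)-v^h(x-he^i))/h$, $D_hv^h=(\partial^i_+v^h)_i$, $\operatorname{div}_h(v^{h,i})_i=\sum_i\partial^i_-v^{h,i}$, and the discrete Hessian $\mathcal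 H_dv^h=(\partial^j_-\partial^i_+v^h)_{i,j}$. Let $\Omega_r\subset\Omega$ be an open bounded convex set such that $u$ is $C^2$ in a neighborhood of every point of $\Omega_r$. Put $\Omega_r^h=\overline{\Omega_r}\cap\mathbb Z_h$, let $\Omega^h_{r,0}$ be the set of $x\in\Omega_r^h$ at which $\mathcal H_dv^h(x)$ is defined using only values at points of $\Omega_r^h$, $\partial\Omega_r^h=\Omega_r^h\setminus\Omega^h_{r,0}$, and $\Omega_s^h=\Omega^h_0\setminus\Omega^h_{r,0}$. Define $M_r[v^h]=\frac1n\operatorname{div}_h[(\operatorname{cof}\operatorname{sym}\mathcal H_dv^h)^TD_hv^h]$, where $\operatorname{sym}A=(A+A^T)/2$ and $\operatorname{cof}A$ is the cofactor matrix. For $x\in\Omega_0^h$ let $W_h(x)$ be the set of orthogonal bases $(\alpha_1,\dots,\alpha_n)$ of $\mathbb R^n$ with $x\pm\alpha_i\in\Omega^h$ for all $i$, and $$M_s^+[v^h](x)=\inf_{(\alpha_1,\dots,\alpha_n)\in W_h(x)}\prod_{i=1}^n\max\Big(\tfrac{v^h(x+\alpha_i)-2v^h(x)+v^h(x-\alpha_i)}{|\alpha_i|^2},0\Big).$$ The hybrid operator is $F_h(v^h)(x)=M_s^+[v^h](x)-f(x)$ for $x\in\Omega_s^h$ and $F_h(v^h)(x)=M_r[v^h](x)-f(x)$ for $x\in\Omega^h_{r,0}$. Let $\Delta_h=\operatorname{div}_hD_h$ and define the linear operator $L_h$ on $\mathcal M(\Omega^h)$ by $L_hv^h(x)=v^h(x)$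 for $x\in\Omega_s^h$ and $L_hv^h(x)=w^h(x)$ for $x\in\Omega^h_{r,0}$, where $w^h$ solves $\Delta_hw^h=v^h$ on $\Omega^h_{r,0}$, $w^h=0$ on $\partial\Omega^h_r$. Let $\alpha=h^{(3+n/2)/(n-1)}$ and for $\nu_1,\nu_2>0$ define $S(\alpha v^h)(x)=\alpha v^h(x)-\nu_x\alpha^nL_hF_h(v^h)(x)$, with $\nu_x=\nu_1$ for $x\in\Omega_s^h$ and $\nu_x=\nu_2$ for $x\in\Omega^h_{r,0}$. The seminorm $|v^h|_{1,h}=\big(h^n\sum_{i=1}^n\sum_{x\in\Omega^h_{r,0}}(\partial^i_+v^h(x))^2\big)^{1/2}$ only involves points of $\Omega^h_{r,0}$. For $\rho>0$, $B_\rho(r_h(u))=\{v^h\in\mathcal M(\Omega^h): |v^h-r_h(u)|_{1,h}\le\rho,\ v^h=r_h(g)\text{ on }\partial\Omega^h,\ v^h=r_h(u)\text{ on }\partial\Omega^h_{r}\}$. For $h$ small, the hybrid discrete problem has a unique solution $u^h$ in $B_\rho(r_h(u))$, $\rho=C_*h^{2+n/2}$ for a fixed constant $C_*$, with $\alpha u^h$ a fixed point of $S$ for suitable $\nu_1,\nu_2$. *)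

(* Defs.v *)
From Stdlib Require Import Reals Lra Lia ZArith List Classical ClassicalEpsilon.
Import ListNotations.
Open Scope R_scope.

Definition pt := list R.

Fixpoint rsum (m : nat) (F : nat -> R) : R :=
  match m with O => 0 | S p => rsum p F + F p end.

Definition edist (x y : pt) : R :=
  sqrt (fold_right Rplus 0 (map (fun p => (fst p - snd p) ^ 2) (combine x y))).

Fixpoint upd (x : pt) (i : nat) (t : R) : pt :=
  match x, i with
  | [], _ => []
  | _ :: r, O => t :: r
  | a :: r, S j => a :: upd r j t
  end.

Definition comb (t : R) (x y : pt) : pt :=
  map (fun p => t * fst p + (1 - t) * snd p) (combine x y).

Definition cube_open (n : nat) (x : pt) : Prop :=
  length x = n /\ Forall (fun t => 0 < t < 1) x.
Definition cube_closed (n : nat) (x : pt) : Prop :=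
  length x = n /\ Forall (fun t => 0 <= t <= 1) x.
Definition cube_bdry (n : nat) (x : pt) : Prop :=
  cube_closed n x /\ ~ cube_open n x.

Definition cont_on (S : pt -> Prop) (phi : pt -> R) : Prop :=
  forall x, S x -> forall eps, 0 < eps -> exists delta, 0 < delta /\
    forall y, S y -> edist x y < delta -> Rabs (phi y - phi x) < eps.

Definition convex_set (S : pt -> Prop) : Prop :=
  forall x y t, S x -> S y -> 0 <= t <= 1 -> S (comb t x y).

Definition convex_on (S : pt -> Prop) (phi : pt -> R) : Prop :=
  forall x y t, S x -> S y -> 0 <= t <= 1 ->
    phi (comb t x y) <= t * phi x + (1 - t) * phi y.

Definition open_in_Rn (n : nat) (S : pt -> Prop) : Prop :=
  forall x, S x -> exists delta, 0 < delta /\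
    forall y, length y = n -> edist x y < delta -> S y.

Definition closure_in_Rn (n : nat) (S : pt -> Prop) (x : pt) : Prop :=
  length x = n /\ forall eps, 0 < eps -> exists y, S y /\ edist x y < eps.

Definition eball (n : nat) (x : pt) (delta : R) (y : pt) : Prop :=
  length y = n /\ edist x y < delta.

Definition partial_lim (phi : pt -> R) (i : nat) (x : pt) (l : R) : Prop :=
  derivable_pt_lim (fun t => phi (upd x i t)) (nth i x 0) l.

Definition C2_with (n : nat) (U : pt -> Prop) (phi : pt -> R)
  (D1 : nat -> pt -> R) (D2 : nat -> nat -> pt -> R) : Prop :=
  (forall x, U x -> forall i, (i < n)%nat ->
      partial_lim phi i x (D1 i x) /\
      forall j, (j < n)%nat -> partial_lim (D1 i) j x (D2 i j x)) /\
  (forall i j, (i < n)%nat -> (j < n)%nat -> cont_on U (D2 i j)).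

Definition C2_on (n : nat) (U : pt -> Prop) (phi : pt -> R) : Prop :=
  exists D1 D2, C2_with n U phi D1 D2.

Definition skip (j k : nat) : nat := if (k <? j)%nat then k else S k.

Definition minor (A : nat -> nat -> R) (i j : nat) : nat -> nat -> R :=
  fun a b => A (skip i a) (skip j b).

Fixpoint det (n : nat) (A : nat -> nat -> R) : R :=
  match n with
  | O => 1
  | S m => rsum (S m) (fun j => (-1) ^ j * A O j * det m (minor A O j))
  end.

Definition cof (n : nat) (A : nat -> nat -> R) : nat -> nat -> R :=
  fun i j => (-1) ^ (i + j) * det (n - 1) (minor A i j).

Definition local_max_at (n : nat) (w : pt -> R) (x0 : pt) : Prop :=
  exists delta, 0 < delta /\
    forall y, cube_open n y -> edist y x0 < delta -> w y <= w x0.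
Definition local_min_at (n : nat) (w : pt -> R) (x0 : pt) : Prop :=
  exists delta, 0 < delta /\
    forall y, cube_open n y -> edist y x0 < delta -> w x0 <= w y.

Definition visc_subsol (n : nat) (f u : pt -> R) : Prop :=
  forall phi D1 D2 x0, C2_with n (cube_open n) phi D1 D2 -> cube_open n x0 ->
    local_max_at n (fun y => u y - phi y) x0 ->
    f x0 <= det n (fun i j => D2 i j x0).

Definition visc_supersol (n : nat) (f u : pt -> R) : Prop :=
  forall phi D1 D2 x0, C2_with n (cube_open n) phi D1 D2 ->
    convex_on (cube_open n) phi -> cube_open n x0 ->
    local_min_at n (fun y => u y - phi y) x0 ->
    det n (fun i j => D2 i j x0) <= f x0.

Definition convex_visc_solution (n : nat) (f g u : pt -> R) : Prop :=
  cont_on (cube_closed n) u /\ convex_on (cube_closed n) u /\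
  visc_subsol n f u /\ visc_supersol n f u /\
  (forall x, cube_bdry n x -> u x = g x).

(* ---------- Grids: points are integer index vectors k, x = h k, h = 1/N ---------- *)
Definition gpt := list Z.

Definition hN (N : nat) : R := / INR N.

Definition xpt (N : nat) (k : gpt) : pt := map (fun z => IZR z * hN N) k.

Fixpoint shift (k : gpt) (i : nat) (s : Z) : gpt :=
  match k, i with
  | [], _ => []
  | a :: r, O => (a + s)%Z :: r
  | a :: r, S j => a :: shift r j s
  end.

Definition vadd (k a : gpt) : gpt := map (fun p => (fst p + snd p)%Z) (combine k a).
Definition vsub (k a : gpt) : gpt := map (fun p => (fst p - snd p)%Z) (combine k a).
Definition dotZ (a b : gpt) : Z := fold_right Z.add 0%Z (map (fun p => (fst p * snd p)%Z) (combine a b)).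

Definition Omh (n N : nat) (k : gpt) : Prop :=
  length k = n /\ Forall (fun z => (0 <= z <= Z.of_nat N)%Z) k.
Definition Omh0 (n N : nat) (k : gpt) : Prop :=
  length k = n /\ Forall (fun z => (0 < z < Z.of_nat N)%Z) k.
Definition dOmh (n N : nat) (k : gpt) : Prop := Omh n N k /\ ~ Omh0 n N k.

Fixpoint grid (n N : nat) : list gpt :=
  match n with
  | O => [[]]
  | S m => flat_map (fun z => map (cons z) (grid m N)) (map Z.of_nat (seq 0 (S N)))
  end.

Definition mesh := gpt -> R.

Definition Omrh (n N : nat) (Or : pt -> Prop) (k : gpt) : Prop :=
  Omh n N k /\ closure_in_Rn n Or (xpt N k).
(* points where H_d v is defined using only values on Omega_r^h:
   H_d v(k)_{ij} uses k, k+e_i, k-e_j, k+e_i-e_j *)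
Definition Omr0 (n N : nat) (Or : pt -> Prop) (k : gpt) : Prop :=
  Omrh n N Or k /\
  forall i j, (i < n)%nat -> (j < n)%nat ->
    Omrh n N Or (shift k i 1) /\ Omrh n N Or (shift k j (-1)) /\
    Omrh n N Or (shift (shift k i 1) j (-1)).
Definition dOmrh (n N : nat) (Or : pt -> Prop) (k : gpt) : Prop :=
  Omrh n N Or k /\ ~ Omr0 n N Or k.
Definition Oms (n N : nat) (Or : pt -> Prop) (k : gpt) : Prop :=
  Omh0 n N k /\ ~ Omr0 n N Or k.

Definition dplus (N : nat) (v : mesh) (i : nat) (k : gpt) : R :=
  (v (shift k i 1) - v k) / hN N.
Definition dminus (N : nat) (v : mesh) (i : nat) (k : gpt) : R :=
  (v k - v (shift k i (-1))) / hN N.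

Definition Hd (N : nat) (v : mesh) (k : gpt) (i j : nat) : R :=
  dminus N (fun p => dplus N v i p) j k.
Definition symHd (N : nat) (v : mesh) (k : gpt) (i j : nat) : R :=
  (Hd N v k i j + Hd N v k j i) / 2.

Definition Mr (n N : nat) (v : mesh) (k : gpt) : R :=
  / INR n * rsum n (fun i =>
     dminus N (fun p => rsum n (fun j => cof n (symHd N v p) j i * dplus N v j p)) i k).

(* W_h(x): orthogonal bases (alpha_1..alpha_n) with x +- alpha_i in Omega^h.
   Since x is a grid point, alpha_i = h a_i with a_i an integer vector. *)
Definition Wh (n N : nat) (k : gpt) (al : list gpt) : Prop :=
  length al = n /\
  (forall i, (i < n)%nat -> length (nth i al []) = n /\ dotZ (nth i al []) (nth i al []) <> 0%Z) /\
  (forall i j, (i < n)%nat -> (j < n)%nat -> i <> j -> dotZ (nth i al []) (nth j al []) = 0%Z) /\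
  (forall i, (i < n)%nat -> Omh n N (vadd k (nth i al [])) /\ Omh n N (vsub k (nth i al []))).

Definition sd2 (N : nat) (v : mesh) (k a : gpt) : R :=
  (v (vadd k a) - 2 * v k + v (vsub k a)) / (hN N ^ 2 * IZR (dotZ a a)).

Definition is_inf (S : R -> Prop) (m : R) : Prop :=
  (forall s, S s -> m <= s) /\ (forall m', (forall s, S s -> m' <= s) -> m' <= m).

Definition infimum (S : R -> Prop) : R := epsilon (inhabits 0) (fun m => is_inf S m).

Definition Ms_plus (n N : nat) (v : mesh) (k : gpt) : R :=
  infimum (fun p => exists al, Wh n N k al /\
         p = fold_right Rmult 1 (map (fun a => Rmax (sd2 N v k a) 0) al)).

Definition Fh (n N : nat) (Or : pt -> Prop) (f : pt -> R) (v : mesh) (k : gpt) : R :=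
  if excluded_middle_informative (Oms n N Or k)
  then Ms_plus n N v k - f (xpt N k)
  else Mr n N v k - f (xpt N k).

Definition ind (P : Prop) : R := if excluded_middle_informative P then 1 else 0.

Definition semi1h (n N : nat) (Or : pt -> Prop) (v : mesh) : R :=
  sqrt (hN N ^ n * rsum n (fun i =>
     fold_right Rplus 0 (map (fun k => ind (Omr0 n N Or k) * (dplus N v i k) ^ 2) (grid n N)))).

Definition rh (N : nat) (w : pt -> R) : mesh := fun k => w (xpt N k).

Definition in_Brho (n N : nat) (Or : pt -> Prop) (g u : pt -> R) (rho : R) (v : mesh) : Prop :=
  semi1h n N Or (fun k => v k - rh N u k) <= rho /\
  (forall k, dOmh n N k -> v k = rh N g k) /\
  (forall k, dOmrh n N Or k -> v k = rh N u k).

(* Main.v *)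
Require Import Defs.
From Stdlib Require Import Reals Lra Lia ZArith List Classical ClassicalEpsilon.
Import ListNotations.
Open Scope R_scope.


Lemma nat_above : forall r, exists k : nat, r < INR k.
Proof.
  intro r. destruct (archimed (Rabs r)) as [H1 H2].
  assert (Hp : (0 < up (Rabs r))%Z).
  { apply lt_IZR. pose proof (Rabs_pos r). simpl. lra. }
  exists (Z.to_nat (up (Rabs r))). rewrite INR_IZR_INZ, Z2Nat.id by lia.
  pose proof (Rle_abs r). lra.
Qed.

Definition sqd (x y : pt) : R :=
  fold_right Rplus 0 (map (fun p => (fst p - snd p) ^ 2) (combine x y)).

Lemma sqd_cons0 : forall a x b y, sqd (a :: x) (b :: y) = (a - b) ^ 2 + sqd x y.
Proof. reflexivity. Qed.

Lemma sqd_nonneg : forall x y, 0 <= sqd x y.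
Proof.
  induction x as [|a x IH]; intros [|b y]; try (unfold sqd; simpl; lra).
  rewrite sqd_cons0. pose proof (IH y). pose proof (pow2_ge_0 (a - b)). lra.
Qed.

Lemma sqd_cons : forall a x b y, sqd (a :: x) (b :: y) = (a - b) ^ 2 + sqd x y.
Proof. reflexivity. Qed.

Definition sincr (phi : nat -> nat) := forall k, (phi k < phi (S k))%nat.

Lemma sincr_ge : forall phi, sincr phi -> forall k, (k <= phi k)%nat.
Proof.
  intros phi H k. induction k. lia. specialize (H k). lia.
Qed.

Lemma sincr_mono : forall phi, sincr phi -> forall a b, (a <= b)%nat -> (phi a <= phi b)%nat.
Proof.
  intros phi H a b Hab. induction Hab. lia. specialize (H m). lia.
Qed.

Lemma sincr_comp : forall f g, sincr f -> sincr g -> sincr (fun k => f (g k)).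
Proof.
  intros f g Hf Hg k. specialize (Hg k).
  assert (forall a b, (a < b)%nat -> (f a < f b)%nat).
  { intros a b Hab. pose proof (sincr_mono f Hf (S a) b Hab). specialize (Hf a). lia. }
  auto.
Qed.

Lemma BW1 : forall t : nat -> R, (forall k, 0 <= t k <= 1) ->
  exists phi l, sincr phi /\ 0 <= l <= 1 /\
   forall eps, 0 < eps -> exists K, forall k, (K <= k)%nat -> (l - t (phi k)) ^ 2 < eps.
Proof.
  intros t Ht.
  destruct (Bolzano_Weierstrass t (fun c => 0 <= c <= 1) (compact_P3 0 1) Ht) as [l Hl].
  assert (Hsel : forall (M j : nat), exists p, (M <= p)%nat /\ Rabs (t p - l) < / (INR j + 1)).
  { intros M j.
    assert (Hpos : 0 < / (INR j + 1)). { apply Rinv_0_lt_compat. pose proof (pos_INR j). lra. }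
    destruct (Hl (disc l (mkposreal _ Hpos)) M) as [p [Hp1 Hp2]].
    - exists (mkposreal _ Hpos). intros y Hy. exact Hy.
    - exists p. split; auto. }
  assert (Hf : exists sel : nat -> nat -> nat, forall M j, (M <= sel M j)%nat /\ Rabs (t (sel M j) - l) < / (INR j + 1)).
  { exists (fun M j => proj1_sig (constructive_indefinite_description _ (Hsel M j))).
    intros M j. exact (proj2_sig (constructive_indefinite_description _ (Hsel M j))). }
  destruct Hf as [sel Hsel2].
  set (phi := fix phi (k : nat) : nat := match k with O => sel O O | S k' => sel (S (phi k')) (S k') end).
  assert (Hphi : forall k, Rabs (t (phi k) - l) < / (INR k + 1)).
  { intros [|k]; simpl; apply Hsel2. }
  exists phi, l. split; [|split].
  - intro k. simpl. pose proof (proj1 (Hsel2 (S (phi k)) (S k))). lia.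
  - split; apply Rnot_lt_le; intro Hc.
    + assert (Hpos : 0 < -l) by lra.
      destruct (Hl (disc l (mkposreal _ Hpos)) O) as [p [_ Hp]].
      * exists (mkposreal _ Hpos). intros y Hy. exact Hy.
      * unfold disc in Hp. simpl in Hp. specialize (Ht p). apply Rabs_def2 in Hp. lra.
    + assert (Hpos : 0 < l - 1) by lra.
      destruct (Hl (disc l (mkposreal _ Hpos)) O) as [p [_ Hp]].
      * exists (mkposreal _ Hpos). intros y Hy. exact Hy.
      * unfold disc in Hp. simpl in Hp. specialize (Ht p). apply Rabs_def2 in Hp. lra.
  - intros eps He. destruct (nat_above (/ eps)) as [K HK].
    exists K. intros k Hk. specialize (Hphi k).
    assert (HKk : INR K <= INR k) by (apply le_INR; lia).
    assert (Hk1 : / (INR k + 1) < eps).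
    { assert (0 < / eps) by (apply Rinv_0_lt_compat; lra).
      rewrite <- (Rinv_inv eps). apply Rinv_lt_contravar. nra. lra. }
    assert (Hle1 : / (INR k + 1) <= 1).
    { rewrite <- Rinv_1. apply Rinv_le_contravar. lra. pose proof (pos_INR k). lra. }
    assert (Ha : Rabs (l - t (phi k)) < / (INR k + 1)) by (rewrite Rabs_minus_sym; exact Hphi).
    assert (Hb : (l - t (phi k)) ^ 2 = Rabs (l - t (phi k)) ^ 2).
    { simpl. rewrite !Rmult_1_r. rewrite <- Rabs_mult. rewrite Rabs_pos_eq. reflexivity. apply Rle_0_sqr. }
    rewrite Hb. pose proof (Rabs_pos (l - t (phi k))). nra.
Qed.

Definition convto (l : pt) (s : nat -> pt) :=
  forall eps, 0 < eps -> exists K, forall k, (K <= k)%nat -> sqd l (s k) < eps.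

Lemma BWn : forall n (s : nat -> pt), (forall k, cube_closed n (s k)) ->
  exists phi l, sincr phi /\ cube_closed n l /\ convto l (fun k => s (phi k)).
Proof.
  induction n as [|m IH]; intros s Hs.
  - exists (fun k => k), []. split; [|split].
    + intro k; lia.
    + split; auto.
    + intros eps He. exists O. intros k _.
      destruct (Hs k) as [Hl _]. destruct (s k); [|discriminate]. unfold sqd; simpl; lra.
  - assert (Hsk : forall k, s k = hd 0 (s k) :: tl (s k)).
    { intro k. destruct (Hs k) as [Hl _]. destruct (s k); [discriminate|reflexivity]. }
    assert (Htl : forall k, cube_closed m (tl (s k))).
    { intro k. destruct (Hs k) as [Hl HF]. rewrite Hsk in Hl, HF. inversion HF. split; simpl in *; auto. }
    assert (Hhd : forall k, 0 <= hd 0 (s k) <= 1).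
    { intro k. destruct (Hs k) as [Hl HF]. rewrite Hsk in HF. inversion HF. auto. }
    destruct (IH (fun k => tl (s k)) Htl) as [phi1 [y [Hp1 [Hy Hc1]]]].
    destruct (BW1 (fun k => hd 0 (s (phi1 k))) (fun k => Hhd _)) as [phi2 [t0 [Hp2 [Ht0 Hc2]]]].
    exists (fun k => phi1 (phi2 k)), (t0 :: y). split; [|split].
    + apply sincr_comp; auto.
    + destruct Hy as [Hyl HyF]. split; simpl; auto.
    + intros eps He.
      destruct (Hc1 (eps / 2)) as [K1 HK1]; [lra|].
      destruct (Hc2 (eps / 2)) as [K2 HK2]; [lra|].
      exists (Nat.max K1 K2). intros k Hk. simpl.
      rewrite (Hsk (phi1 (phi2 k))). rewrite sqd_cons.
      specialize (HK2 k ltac:(lia)). pose proof (sincr_ge phi2 Hp2 k).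
      specialize (HK1 (phi2 k) ltac:(lia)). simpl in HK1. lra.
Qed.

Lemma cont_bounded : forall n F, cont_on (cube_closed n) F ->
  exists B, 0 <= B /\ forall x, cube_closed n x -> Rabs (F x) <= B.
Proof.
  intros n F HF. apply NNPP. intro Hn.
  assert (Hex : forall k : nat, exists x, cube_closed n x /\ INR k < Rabs (F x)).
  { intro k. apply NNPP. intro Hk. apply Hn. exists (INR k). split. apply pos_INR.
    intros x Hx. apply Rnot_lt_le. intro Hc. apply Hk. eauto. }
  set (s := fun k => proj1_sig (constructive_indefinite_description _ (Hex k))).
  assert (Hs : forall k, cube_closed n (s k) /\ INR k < Rabs (F (s k))).
  { intro k. exact (proj2_sig (constructive_indefinite_description _ (Hex k))). }
  destruct (BWn n s (fun k => proj1 (Hs k))) as [phi [l [Hp [Hl Hc]]]].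
  destruct (HF l Hl 1 ltac:(lra)) as [d [Hd Hd2]].
  destruct (Hc (d ^ 2)) as [K HK]. nra.
  destruct (nat_above (Rabs (F l) + 1)) as [K2 HK2].
  set (k := Nat.max K K2).
  specialize (HK k ltac:(unfold k; lia)).
  assert (Hed : edist l (s (phi k)) < d).
  { unfold edist. fold (sqd l (s (phi k))).
    rewrite <- (sqrt_pow2 d) by lra. apply sqrt_lt_1. apply sqd_nonneg. nra. lra. }
  specialize (Hd2 _ (proj1 (Hs (phi k))) Hed).
  destruct (Hs (phi k)) as [_ Hb].
  assert (INR K2 <= INR (phi k)).
  { apply le_INR. pose proof (sincr_ge phi Hp k). unfold k in *. lia. }
  pose proof (Rabs_triang_inv (F (s (phi k))) (F l)). lra.
Qed.

Lemma grid_S : forall m N, grid (S m) N = flat_map (fun z => map (cons z) (grid m N)) (map Z.of_nat (seq 0 (S N))).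
Proof. reflexivity. Qed.

Lemma grid_in : forall n N k, Omh n N k -> In k (grid n N).
Proof.
  induction n as [|m IH]; intros N k [Hl HF].
  - destruct k; [left; reflexivity|discriminate].
  - destruct k as [|z k]; [discriminate|]. simpl in Hl. inversion HF; subst.
    rewrite grid_S. apply in_flat_map. exists z. split.
    + apply in_map_iff. exists (Z.to_nat z). split. lia. apply in_seq. lia.
    + apply in_map. apply IH. split; auto.
Qed.

Lemma in_grid : forall n N k, In k (grid n N) -> Omh n N k.
Proof.
  induction n as [|m IH]; intros N k Hk.
  - simpl in Hk. destruct Hk as [<-|[]]. split; auto.
  - rewrite grid_S in Hk. apply in_flat_map in Hk. destruct Hk as [z [Hz Hk]].
    apply in_map_iff in Hz. destruct Hz as [p [<- Hp]]. apply in_seq in Hp.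
    apply in_map_iff in Hk. destruct Hk as [k' [<- Hk']].
    destruct (IH N k' Hk') as [Hl HF]. split. simpl; auto. constructor; auto. lia.
Qed.

Lemma list_max : forall (F : gpt -> R) l, l <> [] ->
  exists m, In m l /\ forall y, In y l -> F y <= F m.
Proof.
  intros F l. induction l as [|a l IH]; intro H. congruence.
  destruct l as [|b l'].
  - exists a. split. left; auto. intros y [<-|[]]. lra.
  - destruct (IH ltac:(discriminate)) as [m [Hm Hm2]].
    destruct (Rle_dec (F a) (F m)).
    + exists m. split. right; auto. intros y [<-|Hy]; auto.
    + exists a. split. left; auto. intros y [<-|Hy]. lra. specialize (Hm2 y Hy). lra.
Qed.

Lemma grid_ne : forall n N, grid n N <> [].
Proof.
  intros n N H. assert (Omh n N (repeat 0%Z n)).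
  { split. apply repeat_length. apply Forall_forall. intros x Hx.
    apply repeat_spec in Hx. lia. }
  apply grid_in in H0. rewrite H in H0. inversion H0.
Qed.

Lemma hN_pos : forall N, (1 <= N)%nat -> 0 < hN N.
Proof. intros N H. unfold hN. apply Rinv_0_lt_compat. apply lt_0_INR. lia. Qed.

Lemma coord_closed : forall N z, (1 <= N)%nat -> (0 <= z <= Z.of_nat N)%Z ->
  0 <= IZR z * hN N <= 1.
Proof.
  intros N z HN Hz. unfold hN.
  assert (0 < INR N) by (apply lt_0_INR; lia).
  assert (IZR z <= INR N) by (rewrite INR_IZR_INZ; apply IZR_le; lia).
  assert (0 <= IZR z) by (apply IZR_le; lia).
  split. apply Rmult_le_pos; auto. left; apply Rinv_0_lt_compat; auto.
  apply (Rmult_le_reg_r (INR N)); auto. rewrite Rmult_assoc, Rinv_l by lra. lra.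
Qed.

Lemma coord_open : forall N z, (1 <= N)%nat -> 0 < IZR z * hN N < 1 -> (0 < z < Z.of_nat N)%Z.
Proof.
  intros N z HN Hz. unfold hN in Hz.
  assert (0 < INR N) by (apply lt_0_INR; lia).
  assert (0 < / INR N) by (apply Rinv_0_lt_compat; auto).
  split.
  - apply lt_IZR. destruct Hz as [Hz _]. apply (Rmult_lt_reg_r (/ INR N)); auto. lra.
  - apply lt_IZR. rewrite <- INR_IZR_INZ. destruct Hz as [_ Hz].
    apply (Rmult_lt_reg_r (/ INR N)); auto. rewrite Rinv_r by lra. lra.
Qed.

Lemma xpt_len : forall N k, length (xpt N k) = length k.
Proof. intros. unfold xpt. apply length_map. Qed.

Lemma Omh_closed : forall n N k, (1 <= N)%nat -> Omh n N k -> cube_closed n (xpt N k).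
Proof.
  intros n N k HN [Hl HF]. split. rewrite xpt_len; auto.
  unfold xpt. apply Forall_map. eapply Forall_impl; [|exact HF].
  intros z Hz. apply coord_closed; auto.
Qed.

Lemma dOmh_bdry : forall n N k, (1 <= N)%nat -> dOmh n N k -> cube_bdry n (xpt N k).
Proof.
  intros n N k HN [HO Hn]. split. apply Omh_closed; auto.
  intros [Hl HF]. apply Hn. split. rewrite xpt_len in Hl; auto.
  unfold xpt in HF. apply Forall_map in HF. eapply Forall_impl; [|exact HF].
  intros z Hz. apply coord_open; auto.
Qed.

Definition sqn (x : pt) : R := fold_right Rplus 0 (map (fun t => t ^ 2) x).

Lemma sqn_bound : forall x, Forall (fun t => 0 <= t <= 1) x -> 0 <= sqn x <= INR (length x).
Proof.
  induction x as [|a x IH]; intro HF. unfold sqn; simpl; lra.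
  inversion HF; subst. specialize (IH H2). idtac.
  unfold sqn in *. cbn [map fold_right length]. rewrite S_INR. nra.
Qed.

Lemma sqn_ident : forall N k a, length a = length k ->
  sqn (xpt N (vadd k a)) + sqn (xpt N (vsub k a)) - 2 * sqn (xpt N k)
  = 2 * hN N ^ 2 * IZR (dotZ a a).
Proof.
  induction k as [|z k IH]; intros [|b a] Hl; try discriminate.
  - unfold sqn, xpt, vadd, vsub, dotZ; simpl. lra.
  - simpl in Hl. injection Hl as Hl. specialize (IH a Hl).
    unfold sqn, xpt, vadd, vsub, dotZ in *. cbn [map fold_right combine fst snd].
    rewrite ?plus_IZR, ?minus_IZR, ?mult_IZR. rewrite ?plus_IZR, ?mult_IZR.
    assert (Hq : (IZR z + IZR b) * hN N * ((IZR z + IZR b) * hN N * 1) + (IZR z - IZR b) * hN N * ((IZR z - IZR b) * hN N * 1) - 2 * (IZR z * hN N * (IZR z * hN N * 1)) = 2 * (hN N * (hN N * 1)) * (IZR b * IZR b)) by ring.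
    simpl in *. lra.
Qed.

Lemma inf_spec : forall S : R -> Prop, (exists s, S s) -> (forall s, S s -> 0 <= s) ->
  is_inf S (infimum S).
Proof.
  intros S Hne Hlb. unfold infimum. apply epsilon_spec.
  set (E := fun y => S (- y)).
  assert (Hb : bound E). { exists 0. intros y Hy. specialize (Hlb _ Hy). lra. }
  assert (He : exists y, E y). { destruct Hne as [s Hs]. exists (- s). unfold E. rewrite Ropp_involutive. auto. }
  destruct (completeness E Hb He) as [m [Hm1 Hm2]].
  exists (- m). split.
  - intros s Hs. assert (E (- s)) by (unfold E; rewrite Ropp_involutive; auto).
    specialize (Hm1 _ H). lra.
  - intros m' Hm'. assert (is_upper_bound E (- m')).
    { intros y Hy. specialize (Hm' _ Hy). lra. }
    specialize (Hm2 _ H). lra.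
Qed.

Lemma prod_nonneg : forall (F : gpt -> R) l, (forall a, 0 <= F a) -> 0 <= fold_right Rmult 1 (map F l).
Proof.
  intros F l H. induction l; simpl. lra. apply Rmult_le_pos; auto.
Qed.

Lemma prod_ge : forall (F : gpt -> R) c l, 0 <= c -> (forall a, In a l -> c <= F a) ->
  c ^ length l <= fold_right Rmult 1 (map F l).
Proof.
  intros F c l Hc. induction l as [|a l IH]; intro H; simpl. lra.
  apply Rmult_le_compat; auto. apply pow_le; auto.
  apply H; left; auto. apply IH. intros; apply H; right; auto.
Qed.

Definition ev (n i : nat) : gpt := map (fun j => if Nat.eqb j i then 1%Z else 0%Z) (seq 0 n).
Definition stdb (n : nat) : list gpt := map (ev n) (seq 0 n).

Lemma dotZ_map : forall (F G : nat -> Z) l,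
  dotZ (map F l) (map G l) = fold_right Z.add 0%Z (map (fun j => (F j * G j)%Z) l).
Proof. intros F G l. induction l; simpl; auto. unfold dotZ in *. simpl. rewrite IHl. auto. Qed.

Lemma sum_ind : forall i m s,
  fold_right Z.add 0%Z (map (fun j => ((if Nat.eqb j i then 1 else 0) * (if Nat.eqb j i then 1 else 0))%Z) (seq s m))
  = if andb (Nat.leb s i) (Nat.ltb i (s + m)) then 1%Z else 0%Z.
Proof.
  intro i. induction m as [|m IH]; intro s; simpl.
  - destruct (Nat.leb_spec s i); destruct (Nat.ltb_spec i (s + 0)); simpl; lia.
  - rewrite IH. destruct (Nat.eqb_spec s i); destruct (Nat.leb_spec s i); destruct (Nat.ltb_spec i (s + S m));
      destruct (Nat.leb_spec (S s) i); destruct (Nat.ltb_spec i (S s + m)); simpl; lia.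
Qed.

Lemma sum_ind2 : forall i i' l, i <> i' ->
  fold_right Z.add 0%Z (map (fun j => ((if Nat.eqb j i then 1 else 0) * (if Nat.eqb j i' then 1 else 0))%Z) l) = 0%Z.
Proof.
  intros i i' l H. induction l as [|a l IH]; simpl; auto. rewrite IH.
  destruct (Nat.eqb_spec a i); destruct (Nat.eqb_spec a i'); lia.
Qed.

Lemma nth_stdb : forall n i, (i < n)%nat -> nth i (stdb n) [] = ev n i.
Proof.
  intros n i H. unfold stdb. rewrite nth_indep with (d' := ev n 0).
  rewrite map_nth. rewrite seq_nth by auto. auto. rewrite length_map, length_seq. auto.
Qed.

Lemma ev_len : forall n i, length (ev n i) = n.
Proof. intros. unfold ev. rewrite length_map, length_seq. auto. Qed.

Lemma dot_ev : forall n i j, dotZ (ev n i) (ev n j) = if Nat.eqb i j then (if Nat.ltb i n then 1%Z else 0%Z) else 0%Z.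
Proof.
  intros n i j. unfold ev. rewrite dotZ_map. destruct (Nat.eqb_spec i j).
  - subst. rewrite sum_ind. destruct (Nat.ltb_spec j (0 + n)); destruct (Nat.ltb_spec j n); simpl; auto; lia.
  - apply sum_ind2; auto.
Qed.

Lemma vadd_cons : forall z k b a, vadd (z :: k) (b :: a) = (z + b)%Z :: vadd k a.
Proof. reflexivity. Qed.
Lemma vsub_cons : forall z k b a, vsub (z :: k) (b :: a) = (z - b)%Z :: vsub k a.
Proof. reflexivity. Qed.

Lemma vadd_len : forall k a, length a = length k -> length (vadd k a) = length k.
Proof. intros. unfold vadd. rewrite length_map, length_combine. lia. Qed.
Lemma vsub_len : forall k a, length a = length k -> length (vsub k a) = length k.
Proof. intros. unfold vsub. rewrite length_map, length_combine. lia. Qed.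

Lemma ev_shift_ok : forall N i k s, Forall (fun z => (0 < z < Z.of_nat N)%Z) k ->
  Forall (fun z => (0 <= z <= Z.of_nat N)%Z) (vadd k (map (fun j => if Nat.eqb j i then 1%Z else 0%Z) (seq s (length k)))) /\
  Forall (fun z => (0 <= z <= Z.of_nat N)%Z) (vsub k (map (fun j => if Nat.eqb j i then 1%Z else 0%Z) (seq s (length k)))).
Proof.
  intros N i. induction k as [|z k IH]; intros s HF. split; constructor.
  inversion HF; subst. destruct (IH (S s) H2) as [IH1 IH2].
  cbn [length seq map]. rewrite vadd_cons, vsub_cons.
  split; constructor; auto; destruct (Nat.eqb s i); lia.
Qed.

Lemma stdb_Wh : forall n N k, Omh0 n N k -> Wh n N k (stdb n).
Proof.
  intros n N k [Hl HF]. split; [|split; [|split]].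
  - unfold stdb. rewrite length_map, length_seq. auto.
  - intros i Hi. rewrite nth_stdb by auto. split. apply ev_len.
    rewrite dot_ev, Nat.eqb_refl. destruct (Nat.ltb_spec i n); lia.
  - intros i j Hi Hj Hij. rewrite !nth_stdb by auto. rewrite dot_ev.
    destruct (Nat.eqb_spec i j); auto; lia.
  - intros i Hi. rewrite nth_stdb by auto. unfold ev. rewrite <- Hl.
    destruct (ev_shift_ok N i k 0 HF) as [H1 H2]. split; split; auto.
    rewrite vadd_len; auto. rewrite length_map, length_seq; auto.
    rewrite vsub_len; auto. rewrite length_map, length_seq; auto.
Qed.

Lemma rsum_nonneg : forall m F, (forall j, 0 <= F j) -> 0 <= rsum m F.
Proof. induction m; intros F H; simpl. lra. pose proof (IHm F H). pose proof (H m). lra. Qed.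

Lemma rsum_ge : forall m F i, (forall j, 0 <= F j) -> (i < m)%nat -> F i <= rsum m F.
Proof.
  induction m; intros F i H Hi. lia. simpl. destruct (Nat.eq_dec i m).
  - subst. pose proof (rsum_nonneg m F H). lra.
  - pose proof (IHm F i H ltac:(lia)). pose proof (H m). lra.
Qed.

Lemma fold_nonneg : forall (G : gpt -> R) l, (forall y, 0 <= G y) -> 0 <= fold_right Rplus 0 (map G l).
Proof. intros G l H. induction l; simpl. lra. pose proof (H a). lra. Qed.

Lemma fold_ge : forall (G : gpt -> R) l x, (forall y, 0 <= G y) -> In x l -> G x <= fold_right Rplus 0 (map G l).
Proof.
  intros G l x H. induction l as [|a l IH]; intro Hx. destruct Hx. simpl.
  destruct Hx as [<-|Hx].
  - pose proof (fold_nonneg G l H). lra.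
  - pose proof (IH Hx). pose proof (H a). lra.
Qed.

Lemma ind_nonneg : forall P, 0 <= Defs.ind P.
Proof. intro P. unfold Defs.ind. destruct (excluded_middle_informative P); lra. Qed.

Lemma ind_true : forall P : Prop, P -> Defs.ind P = 1.
Proof. intros P H. unfold Defs.ind. destruct (excluded_middle_informative P); tauto. Qed.

Lemma dotZ_self_nonneg : forall a, (0 <= dotZ a a)%Z.
Proof.
  induction a as [|b a IH]. unfold dotZ; simpl; lia.
  unfold dotZ in *. simpl. nia.
Qed.

Lemma pow_ge_base : forall x m, 1 <= x -> x <= x ^ S m.
Proof.
  intros x m H. induction m. simpl. lra.
  change (x ^ S (S m)) with (x * x ^ S m). nra.
Qed.

Lemma rpow_sq : forall h n, 0 < h -> (Rpower h (2 + INR n / 2)) ^ 2 = h ^ 4 * h ^ n.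
Proof.
  intros h n Hh. simpl. rewrite Rmult_1_r. rewrite <- Rpower_plus.
  replace (2 + INR n / 2 + (2 + INR n / 2)) with (INR 4 + INR n) by (simpl; lra).
  rewrite Rpower_plus, !Rpower_pow by auto. simpl. ring.
Qed.

Theorem mainTheorem4 :
  forall (n : nat) (f g u : pt -> R) (Or : pt -> Prop),
    (2 <= n)%nat ->
    (* f in C(closure_in_Rn Omega), f > 0 *)
    cont_on (cube_closed n) f ->
    (forall x, cube_closed n x -> 0 < f x) ->
    (* g in C(dOmega) with a convex extension in C(closure_in_Rn Omega) *)
    cont_on (cube_bdry n) g ->
    (exists gtil, cont_on (cube_closed n) gtil /\ convex_on (cube_closed n) gtil /\
                (forall x, cube_bdry n x -> gtil x = g x)) ->
    (* u : the convex viscosity solution of det D^2 u = f, u = g on dOmega *)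
    convex_visc_solution n f g u ->
    (* Omega_r : open, bounded, convex subset of Omega, u C^2 near each point *)
    (forall x, Or x -> cube_open n x) ->
    open_in_Rn n Or ->
    convex_set Or ->
    (forall x, Or x -> exists delta, 0 < delta /\ C2_on n (eball n x delta) u) ->
    forall Cstar : R, 0 < Cstar ->
    exists C : R, 0 < C /\
    exists h0 : R, 0 < h0 /\
    forall N : nat, (1 <= N)%nat -> hN N < h0 ->
    forall uh : mesh,
      (forall k, Omh0 n N k -> Fh n N Or f uh k = 0) ->
      in_Brho n N Or g u (Cstar * Rpower (hN N) (2 + INR n / 2)) uh ->
      forall k, Omh0 n N k -> Rabs (uh k) <= C.
Proof.
  intros n f g u Or Hn Hfc Hfpos Hgc Hgt Hu HOr Hopen Hconv HC2 Cstar HCs.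
  destruct (cont_bounded n f Hfc) as [Bf [HBf0 HBf]].
  destruct Hu as [Huc [Hucv [Hsub [Hsup Hbd]]]].
  destruct (cont_bounded n u Huc) as [Bu [HBu0 HBu]].
  set (A := (Bf + 1) / 2).
  assert (HA : 0 < A) by (unfold A; lra).
  assert (Hn0 : 0 <= INR n) by apply pos_INR.
  exists (Bu + Cstar + A * INR n + 1). split. nra.
  exists 1. split. lra.
  intros N HN Hh uh HF HB k0 Hk0.
  destruct HB as [Hsemi [Hbdry Hrbd]].
  assert (Hh0 : 0 < hN N) by (apply hN_pos; auto).
  assert (HNh : INR N * hN N = 1).
  { unfold hN. rewrite Rinv_r. auto. apply not_0_INR. lia. }
  assert (HN1 : 1 <= INR N) by (apply (le_INR 1); auto).
  assert (Hh1 : hN N <= 1) by nra.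
  set (v := fun k => uh k - rh N u k).
  assert (Hstep : forall k, Omr0 n N Or k -> Rabs (v (Defs.shift k 0%nat 1%Z) - v k) <= Cstar * hN N ^ 3).
  { intros k Hk.
    set (T := hN N ^ n * rsum n (fun i =>
       fold_right Rplus 0 (map (fun k => Defs.ind (Omr0 n N Or k) * (dplus N (fun k => uh k - rh N u k) i k) ^ 2) (grid n N)))).
    assert (HG : forall i y, 0 <= Defs.ind (Omr0 n N Or y) * (dplus N (fun k => uh k - rh N u k) i y) ^ 2).
    { intros i y. apply Rmult_le_pos. apply ind_nonneg. apply pow2_ge_0. }
    assert (HT0 : 0 <= T).
    { unfold T. apply Rmult_le_pos. apply pow_le; lra. apply rsum_nonneg. intro j. apply fold_nonneg. auto. }
    assert (HT : T <= (Cstar * Rpower (hN N) (2 + INR n / 2)) ^ 2).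
    { unfold semi1h in Hsemi. fold T in Hsemi. rewrite <- (sqrt_sqrt T) by auto.
      pose proof (sqrt_pos T). simpl. rewrite Rmult_1_r. apply Rmult_le_compat; auto. }
    rewrite Rpow_mult_distr, rpow_sq in HT by auto.
    assert (Hterm : hN N ^ n * (dplus N v 0 k) ^ 2 <= T).
    { unfold T. apply Rmult_le_compat_l. apply pow_le; lra.
      eapply Rle_trans; [|apply (rsum_ge n _ 0%nat)]; [| |lia].
      - eapply Rle_trans; [|apply (fold_ge _ _ k)].
        + cbv beta. rewrite ind_true by auto. unfold v. lra.
        + auto.
        + apply grid_in. destruct Hk as [[H1 _] _]. auto.
      - intro j. apply fold_nonneg. auto. }
    assert (Hhn : 0 < hN N ^ n) by (apply pow_lt; auto).
    assert (Hd2 : (dplus N v 0 k) ^ 2 <= (Cstar * hN N ^ 2) ^ 2).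
    { apply (Rmult_le_reg_l (hN N ^ n)); auto. rewrite Rpow_mult_distr. 
      replace ((hN N ^ 2) ^ 2) with (hN N ^ 4) by ring. nra. }
    assert (Hd : Rabs (dplus N v 0 k) <= Cstar * hN N ^ 2).
    { assert (Hq : Rsqr (dplus N v 0 k) <= Rsqr (Cstar * hN N ^ 2)) by (unfold Rsqr; simpl in Hd2; lra).
      apply Rsqr_le_abs_0 in Hq.
      rewrite (Rabs_pos_eq (Cstar * hN N ^ 2)) in Hq. auto. apply Rmult_le_pos. lra. apply pow_le; lra. }
    unfold dplus in Hd. unfold Rdiv in Hd. rewrite Rabs_mult, Rabs_inv, (Rabs_pos_eq (hN N)) in Hd by lra.
    assert (Heq : Rabs (v (Defs.shift k 0%nat 1%Z) - v k) = Rabs (v (Defs.shift k 0%nat 1%Z) - v k) * / hN N * hN N).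
    { field. lra. }
    rewrite Heq. replace (Cstar * hN N ^ 3) with (Cstar * hN N ^ 2 * hN N) by ring.
    apply Rmult_le_compat_r; lra. }
  assert (Hwalk : forall m k, Omrh n N Or k -> (Z.of_nat N - nth 0 k 0%Z <= Z.of_nat m)%Z ->
            Rabs (v k) <= INR m * (Cstar * hN N ^ 3)).
  { induction m as [|m IH]; intros k Hk Hm.
    - destruct (classic (Omr0 n N Or k)) as [Hr|Hr].
      + exfalso. destruct Hr as [_ Hr]. destruct (Hr 0%nat 0%nat ltac:(lia) ltac:(lia)) as [[[Hl HFs] _] _].
        destruct Hk as [[Hl0 _] _]. destruct k as [|z k]; [simpl in Hl0; lia|].
        simpl in HFs. inversion HFs. simpl in Hm. lia.
      + unfold v. rewrite Hrbd by (split; auto). simpl. rewrite Rminus_diag, Rabs_R0. lra.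
    - destruct (classic (Omr0 n N Or k)) as [Hr|Hr].
      + pose proof (Hstep k Hr) as Hs. destruct Hr as [_ Hr'].
        destruct (Hr' 0%nat 0%nat ltac:(lia) ltac:(lia)) as [Hsh _].
        assert (Hm' : (Z.of_nat N - nth 0 (Defs.shift k 0%nat 1%Z) 0%Z <= Z.of_nat m)%Z).
        { destruct Hk as [[Hl0 _] _]. destruct k as [|z k]; [simpl in Hl0; lia|]. simpl in *. lia. }
        specialize (IH _ Hsh Hm'). rewrite S_INR.
        pose proof (Rabs_triang_inv (v (Defs.shift k 0%nat 1%Z)) (v k)).
        pose proof (Rabs_minus_sym (v (Defs.shift k 0%nat 1%Z)) (v k)).
        assert (Rabs (v k) - Rabs (v (Defs.shift k 0%nat 1%Z)) <= Rabs (v k - v (Defs.shift k 0%nat 1%Z))) by apply Rabs_triang_inv.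
        lra.
      + unfold v. rewrite Hrbd by (split; auto). rewrite Rminus_diag, Rabs_R0.
        apply Rmult_le_pos. apply pos_INR. apply Rmult_le_pos. lra. apply pow_le; lra. }
  assert (Hr0 : forall k, Omr0 n N Or k -> Rabs (v k) <= Cstar).
  { intros k Hk. assert (Hkr := proj1 Hk).
    assert (Hz : (Z.of_nat N - nth 0 k 0%Z <= Z.of_nat N)%Z).
    { destruct Hkr as [[Hl0 HFk] _]. destruct k as [|z k]; [simpl in Hl0; lia|].
      inversion HFk. simpl. lia. }
    pose proof (Hwalk N k Hkr Hz).
    replace (INR N * (Cstar * hN N ^ 3)) with (Cstar * hN N ^ 2 * (INR N * hN N)) in H by ring.
    rewrite HNh in H. assert (hN N ^ 2 <= 1) by nra. nra. }
  assert (HuG : forall k, Omh n N k -> Rabs (rh N u k) <= Bu).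
  { intros k Hk. apply HBu. apply Omh_closed; auto. }
  assert (HrB : forall k, Omr0 n N Or k -> Rabs (uh k) <= Bu + Cstar).
  { intros k Hk. pose proof (Hr0 k Hk). unfold v in H.
    pose proof (HuG k (proj1 (proj1 Hk))).
    pose proof (Rabs_triang (uh k - rh N u k) (rh N u k)).
    replace (uh k - rh N u k + rh N u k) with (uh k) in H1 by ring. lra. }
  assert (HbB : forall k, dOmh n N k -> Rabs (uh k) <= Bu).
  { intros k Hk. rewrite Hbdry by auto. unfold rh. rewrite <- Hbd.
    apply HBu. apply Omh_closed; auto. apply Hk. apply dOmh_bdry; auto. }
  assert (HMs : forall k, Oms n N Or k ->
     is_inf (fun p => exists al, Wh n N k al /\
         p = fold_right Rmult 1 (map (fun a => Rmax (sd2 N uh k a) 0) al)) (f (xpt N k))).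
  { intros k Hk. pose proof (HF k (proj1 Hk)) as HFk. unfold Fh in HFk.
    destruct (excluded_middle_informative (Oms n N Or k)); [|contradiction].
    replace (f (xpt N k)) with (Ms_plus n N uh k) by lra. unfold Ms_plus.
    apply inf_spec.
    - exists (fold_right Rmult 1 (map (fun a => Rmax (sd2 N uh k a) 0) (stdb n))).
      exists (stdb n). split; auto. apply stdb_Wh. apply Hk.
    - intros s [al [_ ->]]. apply prod_nonneg. intro a. apply Rmax_r. }
  assert (Hfk : forall k, Omh n N k -> 0 < f (xpt N k) <= Bf).
  { intros k Hk. pose proof (Omh_closed n N k HN Hk). split. auto.
    pose proof (HBf _ H). pose proof (Rle_abs (f (xpt N k))). lra. }
  destruct (list_max uh (grid n N) (grid_ne n N)) as [km [Hkm1 Hkm2]].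
  assert (Hup : uh km <= Bu + Cstar).
  { pose proof (in_grid _ _ _ Hkm1) as HOm.
    destruct (classic (Omh0 n N km)) as [H0|H0].
    - destruct (classic (Omr0 n N Or km)) as [Hr|Hr].
      + pose proof (HrB km Hr). pose proof (Rle_abs (uh km)). lra.
      + exfalso. assert (Hs : Oms n N Or km) by (split; auto).
        destruct (HMs km Hs) as [Hi1 _].
        destruct (stdb_Wh n N km H0) as [_ [Hw2 [_ Hw4]]].
        destruct (Hw4 0%nat ltac:(lia)) as [Ha Hb]. rewrite nth_stdb in Ha, Hb by lia.
        assert (Hp := Hi1 _ (ex_intro _ (stdb n) (conj (stdb_Wh n N km H0) eq_refl))).
        pose proof (Hfk km HOm).
        destruct n as [|n']; [lia|].
        unfold stdb in Hp. cbn [seq map fold_right] in Hp.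
        assert (Hsd : 0 < sd2 N uh km (ev (S n') 0)).
        { apply Rnot_le_lt. intro Hc. rewrite Rmax_right in Hp by auto. lra. }
        unfold sd2 in Hsd. rewrite dot_ev in Hsd. simpl in Hsd.
        assert (Hden : 0 < hN N * (hN N * 1) * 1) by nra.
        set (D := hN N * (hN N * 1) * 1) in *.
        set (num := uh (vadd km (ev (S n') 0)) - 2 * uh km + uh (vsub km (ev (S n') 0))) in *.
        assert (Hnum : 0 < num).
        { replace num with (num / D * D) by (field; lra). apply Rmult_lt_0_compat; lra. }
        unfold num in Hnum.
        pose proof (Hkm2 _ (grid_in _ _ _ Ha)). pose proof (Hkm2 _ (grid_in _ _ _ Hb)). lra.
    - assert (Hd : dOmh n N km) by (split; auto).
      pose proof (HbB km Hd). pose proof (Rle_abs (uh km)). lra. }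
  set (z := fun k => uh k - A * sqn (xpt N k)).
  assert (Hsq : forall k, Omh n N k -> 0 <= sqn (xpt N k) <= INR n).
  { intros k Hk. destruct (Omh_closed n N k HN Hk) as [Hl HFx]. rewrite <- Hl. apply sqn_bound; auto. }
  destruct (list_max (fun k => - z k) (grid n N) (grid_ne n N)) as [kn [Hkn1 Hkn2]].
  assert (Hlow : - (Bu + Cstar + A * INR n) <= z kn).
  { pose proof (in_grid _ _ _ Hkn1) as HOm. pose proof (Hsq kn HOm) as Hsqk.
    assert (HAs : A * sqn (xpt N kn) <= A * INR n) by (apply Rmult_le_compat_l; lra).
    unfold z.
    destruct (classic (Omh0 n N kn)) as [H0|H0].
    - destruct (classic (Omr0 n N Or kn)) as [Hr|Hr].
      + pose proof (HrB kn Hr). pose proof (Rle_abs (- uh kn)) as Hq. rewrite Rabs_Ropp in Hq. lra.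
      + exfalso. assert (Hs : Oms n N Or kn) by (split; auto).
        destruct (HMs kn Hs) as [_ Hi2].
        assert (Hlb : (2 * A) ^ n <= f (xpt N kn)).
        { apply Hi2. intros s [al [[Hl [Hw2 [_ Hw4]]] ->]].
          rewrite <- Hl. apply prod_ge. lra.
          intros a Ha. apply In_nth with (d := []) in Ha. destruct Ha as [i [Hi <-]].
          rewrite Hl in Hi. destruct (Hw2 i Hi) as [Hla Hdz]. destruct (Hw4 i Hi) as [Hp Hm].
          eapply Rle_trans; [|apply Rmax_l].
          pose proof (Hkn2 _ (grid_in _ _ _ Hp)) as Hz1. pose proof (Hkn2 _ (grid_in _ _ _ Hm)) as Hz2.
          unfold z in Hz1, Hz2.
          assert (Hlk : length (nth i al []) = length kn) by (rewrite Hla; symmetry; apply HOm).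
          pose proof (sqn_ident N kn (nth i al []) Hlk) as Hid.
          pose proof (dotZ_self_nonneg (nth i al [])).
          assert (HD : 0 < IZR (dotZ (nth i al []) (nth i al []))) by (apply IZR_lt; lia).
          assert (Hden : 0 < hN N ^ 2 * IZR (dotZ (nth i al []) (nth i al []))) by (apply Rmult_lt_0_compat; nra).
          unfold sd2. apply (Rmult_le_reg_r (hN N ^ 2 * IZR (dotZ (nth i al []) (nth i al [])))); auto.
          match goal with |- _ <= ?q => replace q with (uh (vadd kn (nth i al [])) - 2 * uh kn + uh (vsub kn (nth i al []))) by (field; lra) end.
          assert (HAq : A * (sqn (xpt N (vadd kn (nth i al []))) + sqn (xpt N (vsub kn (nth i al []))) - 2 * sqn (xpt N kn)) = A * (2 * hN N ^ 2 * IZR (dotZ (nth i al []) (nth i al [])))) by (rewrite Hid; auto).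
          nra. }
        pose proof (Hfk kn HOm).
        destruct n as [|n']; [lia|].
        pose proof (pow_ge_base (2 * A) n' ltac:(unfold A; lra)). unfold A in *. lra.
    - assert (Hd : dOmh n N kn) by (split; auto).
      pose proof (HbB kn Hd). pose proof (Rle_abs (- uh kn)) as Hq. rewrite Rabs_Ropp in Hq. lra. }
  assert (HOk : Omh n N k0).
  { destruct Hk0 as [Hl HFk]. split; auto. eapply Forall_impl; [|exact HFk]. intros a Ha; cbv beta in Ha; lia. }
  pose proof (Hkm2 _ (grid_in _ _ _ HOk)) as Hz3.
  pose proof (Hkn2 _ (grid_in _ _ _ HOk)) as Hz4. unfold z in Hz4.
  pose proof (Hsq k0 HOk).
  assert (0 <= A * sqn (xpt N k0)) by (apply Rmult_le_pos; lra).
  unfold z in Hlow, Hz4. assert (0 <= A * INR n) by (apply Rmult_le_pos; lra). apply Rabs_le. split; lra.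
Qed.
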